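(* Let $k\ge 2$ be even, $\gamma>0$, and let $p\in\Delta([k])$ satisfy $d_{TV}(p,u)>\gamma$. Let $S$ be a uniformly random subset of $[k]$ of cardinality $k/2$. Then $$\Pr\Big[\Big|p(S)-\tfrac12\Big|>\frac{\gamma}{\sqrt{5k}}\Big]>\frac{1}{477}.$$
   Context: $\Delta([k])$ is the set of probability distributions on $[k]=\{1,\dots,k\}$, $u$ is the uniform distribution on $[k]$, $d_{TV}(p,q)=\frac12\|p-q\|_1$, and $p(S)=\sum_{x\in S}p(x)$. *)

(* Defs.v *)
From HB Require Import structures.
From mathcomp Require Import all_boot all_order all_algebra.
Set Implicit Arguments. Unset Strict Implicit. Unset Printing Implicit Defensive.
Import Order.TTheory GRing.Theory Num.Theory.
Local Open Scope ring_scope.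

(* [k] is modelled by 'I_k = {0,...,k-1}. *)

Definition is_distr (R : numDomainType) (k : nat) (p : {ffun 'I_k -> R}) : Prop :=
  (forall i, 0 <= p i) /\ \sum_i p i = 1.

Definition unif (R : numFieldType) (k : nat) : {ffun 'I_k -> R} :=
  [ffun _ => (k%:R)^-1].

Definition dTV (R : numFieldType) (k : nat) (p q : {ffun 'I_k -> R}) : R :=
  2^-1 * \sum_i `|p i - q i|.

Definition massof (R : numDomainType) (k : nat) (p : {ffun 'I_k -> R})
  (S : {set 'I_k}) : R := \sum_(x in S) p x.

Definition prob_unif_subset (R : numFieldType) (k m : nat)
  (P : {set 'I_k} -> bool) : R :=
  #|[set S : {set 'I_k} | (#|S| == m)%N && P S]|%:R /
  #|[set S : {set 'I_k} | #|S| == m]|%:R.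

(* Main.v *)
Require Import Defs.
From HB Require Import structures.
From mathcomp Require Import all_boot all_order all_algebra.
From mathcomp Require Import zify ring lra.
Set Implicit Arguments. Unset Strict Implicit. Unset Printing Implicit Defensive.
Import Order.TTheory GRing.Theory Num.Theory.
Local Open Scope ring_scope.

Definition Ys (R : rcfType) (k : nat) (x : 'I_k -> R) (S : {set 'I_k}) : R :=
  \sum_(i in S) x i.

Lemma sumC (R : rcfType) (k : nat) (x : 'I_k -> R) (S : {set 'I_k}) :
  \sum_i x i = 0 -> \sum_(j in ~:S) x j = - Ys x S.
Proof.
move=> hx.
have := hx; rewrite (bigID (mem S)) /= => h.
have e : \sum_(j in ~:S) x j = \sum_(i | i \notin S) x i by apply: eq_bigl => i; rewrite inE.
rewrite e /Ys; apply: (addrI (\sum_(i in S) x i)); rewrite h subrr //.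
Qed.

Lemma sum_sq_split (R : rcfType) (k : nat) (x : 'I_k -> R) (S : {set 'I_k}) :
  \sum_(i in S) x i ^+ 2 + \sum_(j in ~:S) x j ^+ 2 = \sum_i x i ^+ 2.
Proof.
rewrite [RHS](bigID (mem S)) /=; congr (_ + _).
by apply: eq_bigl => i; rewrite inE.
Qed.

Lemma sumD1 (R : rcfType) (k m : nat) (x : 'I_k -> R) (S : {set 'I_k}) :
  \sum_i x i = 0 -> #|S| = m -> #|~:S| = m ->
  \sum_(i in S) \sum_(j in ~:S) (x j - x i) = - (2 * m%:R) * Ys x S.
Proof.
move=> hx hS hSc.
under eq_bigr => i _ do rewrite sumrB sumC // sumr_const hSc.
rewrite sumrB sumr_const hS sumrMnl /Ys; ring.
Qed.

Lemma sumD2 (R : rcfType) (k m : nat) (x : 'I_k -> R) (S : {set 'I_k}) :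
  \sum_i x i = 0 -> #|S| = m -> #|~:S| = m ->
  \sum_(i in S) \sum_(j in ~:S) (x j - x i) ^+ 2 =
    m%:R * \sum_i x i ^+ 2 + 2 * Ys x S ^+ 2.
Proof.
move=> hx hS hSc.
have inner : forall i, \sum_(j in ~:S) (x j - x i) ^+ 2 =
   \sum_(j in ~:S) x j ^+ 2 + 2 * x i * Ys x S + x i ^+ 2 *+ m.
  move=> i; under eq_bigr => j _ do rewrite sqrrB.
  rewrite big_split /= sumrB sumr_const hSc sumrMnl -mulr_suml (sumC (x:=x) S hx).
  ring.
under eq_bigr => i _ do rewrite inner.
rewrite !big_split /= sumr_const hS -!mulr_suml -!mulr_sumr sumrMnl.
rewrite -(sum_sq_split x S) -/(Ys x S).
ring.
Qed.

Definition Pt (k m : nat) (u : {set 'I_k} * 'I_k * 'I_k) : bool :=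
  [&& #|u.1.1| == m, u.1.2 \in u.1.1 & u.2 \notin u.1.1].
Definition swp (k : nat) (u : {set 'I_k} * 'I_k * 'I_k) :=
  ((u.2 |: (u.1.1 :\ u.1.2), u.2), u.1.2).
Definition phi (k m : nat) (u : {set 'I_k} * 'I_k * 'I_k) :=
  if Pt m u then swp u else u.

Lemma Pt_swp k m u : Pt m u -> Pt m (@swp k u).
Proof.
case: u => [[S i] j] /=; rewrite /Pt /swp /= => /and3P [/eqP hS hi hj].
have hij : i != j by apply: contraNneq hj => <-.
rewrite cardsU1 !inE eqxx /= (negbTE hj) andbF /= (negbTE hij) /=.
rewrite (cardsD1 i S) hi in hS. by rewrite -hS /= !eqxx.
Qed.

Lemma swpK k m u : Pt m u -> @swp k (swp u) = u.
Proof.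
case: u => [[S i] j] /=; rewrite /Pt /swp /= => /and3P [/eqP hS hi hj].
congr (_, _, _); apply/setP => l; rewrite !inE.
have [->|hl] := eqVneq l i; first by [].
have [->|hl2] := eqVneq l j; first by rewrite (negbTE hj).
by [].
Qed.

Lemma phiK k m : involutive (@phi k m).
Proof.
move=> u; rewrite /phi; case h: (Pt m u); last by rewrite h.
by rewrite Pt_swp // (swpK h).
Qed.

Lemma Pt_phi k m u : Pt m (@phi k m u) = Pt m u.
Proof. by rewrite /phi; case h: (Pt m u) => //; rewrite Pt_swp. Qed.

Lemma reindex_swp (R : rcfType) k (m : nat) (F : {set 'I_k} -> 'I_k -> 'I_k -> R) :
  \sum_(u | Pt m u) F u.1.1 u.1.2 u.2 =
  \sum_(u | Pt m u) F (u.2 |: (u.1.1 :\ u.1.2)) u.2 u.1.2.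
Proof.
rewrite (reindex_inj (inv_inj (@phiK k m))) /=.
apply: eq_big => u; first by rewrite Pt_phi.
by rewrite Pt_phi => h; rewrite /phi h.
Qed.

Lemma triple_sum (R : rcfType) k (m : nat) (F : {set 'I_k} -> 'I_k -> 'I_k -> R) :
  \sum_(S : {set 'I_k} | #|S| == m) \sum_(i in S) \sum_(j in ~:S) F S i j =
  \sum_(u | Pt m u) F u.1.1 u.1.2 u.2.
Proof.
have e : forall S i, \sum_(j in ~:S) F S i j = \sum_(j | j \notin S) F S i j.
  by move=> S i; apply: eq_bigl => j; rewrite inE.
under eq_bigr do under eq_bigr do rewrite e.
rewrite pair_big_dep pair_big_dep /=.
by apply: eq_bigl => u; rewrite /Pt andbA.
Qed.

Lemma Ys_swp (R : rcfType) k (x : 'I_k -> R) (S : {set 'I_k}) (i j : 'I_k) : i \in S -> j \notin S ->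
  Ys x (j |: (S :\ i)) = Ys x S - x i + x j.
Proof.
move=> hi hj; rewrite /Ys big_setU1 /=; last by rewrite !inE (negbTE hj) andbF.
rewrite (big_setD1 i hi) /=; set a := \sum_(l in S :\ i) x l; ring.
Qed.

Lemma cardC_m k m (S : {set 'I_k}) : k = (m + m)%N -> #|S| = m -> #|~:S| = m.
Proof.
move=> hk hS; have := cardsC S; rewrite card_ord hS => h.
by apply/eqP; rewrite -(eqn_add2l m) h; apply/eqP.
Qed.

Lemma sum_P_D (R : rcfType) k (m : nat) (x : 'I_k -> R) (w : R -> R) :
  k = (m + m)%N -> \sum_i x i = 0 ->
  \sum_(u | Pt m u) (x u.2 - x u.1.2) * w (Ys x u.1.1) =
  \sum_(S : {set 'I_k} | #|S| == m) (- (2 * m%:R) * Ys x S) * w (Ys x S).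
Proof.
move=> hk hx; rewrite -(@triple_sum _ _ m (fun S i j => (x j - x i) * w (Ys x S))).
apply: eq_bigr => S /eqP hS.
under eq_bigr do rewrite -mulr_suml. rewrite -mulr_suml.
by rewrite (sumD1 hx hS (cardC_m hk hS)).
Qed.

Lemma sum_P_D2 (R : rcfType) k (m : nat) (x : 'I_k -> R) (w : R -> R) :
  k = (m + m)%N -> \sum_i x i = 0 ->
  \sum_(u | Pt m u) (x u.2 - x u.1.2) ^+ 2 * w (Ys x u.1.1) =
  \sum_(S : {set 'I_k} | #|S| == m) (m%:R * \sum_i x i ^+ 2 + 2 * Ys x S ^+ 2) * w (Ys x S).
Proof.
move=> hk hx; rewrite -(@triple_sum _ _ m (fun S i j => (x j - x i) ^+ 2 * w (Ys x S))).
apply: eq_bigr => S /eqP hS.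
under eq_bigr do rewrite -mulr_suml. rewrite -mulr_suml.
by rewrite (sumD2 hx hS (cardC_m hk hS)).
Qed.

Lemma key_id (R : rcfType) k (m : nat) (x : 'I_k -> R) (h : R -> R) :
  k = (m + m)%N -> \sum_i x i = 0 ->
  \sum_(u | Pt m u) (x u.2 - x u.1.2) *
     (h (Ys x (u.2 |: (u.1.1 :\ u.1.2))) - h (Ys x u.1.1)) =
  \sum_(S : {set 'I_k} | #|S| == m) (4 * m%:R) * Ys x S * h (Ys x S).
Proof.
move=> hk hx.
under eq_bigr do rewrite mulrBr.
rewrite sumrB.
have := @reindex_swp _ _ m (fun S i j => (x i - x j) * h (Ys x S)) => /= <-.
have e : \sum_(u | Pt m u) (x u.1.2 - x u.2) * h (Ys x u.1.1) =
         - \sum_(u | Pt m u) (x u.2 - x u.1.2) * h (Ys x u.1.1).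
  rewrite -sumrN; apply: eq_bigr => u _; rewrite -mulNr opprB //.
rewrite e sum_P_D // -sumrN -big_split /=; apply: eq_bigr => S _.
ring.
Qed.

Lemma Q2_id (R : rcfType) k (m : nat) (x : 'I_k -> R) :
  k = (m + m)%N -> \sum_i x i = 0 ->
  \sum_(S : {set 'I_k} | #|S| == m) (4 * m%:R) * Ys x S * Ys x S =
  \sum_(S : {set 'I_k} | #|S| == m) (m%:R * \sum_i x i ^+ 2 + 2 * Ys x S ^+ 2).
Proof.
move=> hk hx; rewrite -(key_id id hk hx).
have := sum_P_D2 (fun _ => 1) hk hx => /=.
under eq_bigr do rewrite mulr1. under [in RHS]eq_bigr do rewrite mulr1.
move=> <-; apply: eq_bigr => u /and3P [_ hi hj].
rewrite Ys_swp //; ring.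
Qed.

Lemma Q4_ineq (R : rcfType) k (m : nat) (x : 'I_k -> R) :
  k = (m + m)%N -> \sum_i x i = 0 ->
  \sum_(S : {set 'I_k} | #|S| == m) (4 * m%:R) * Ys x S * Ys x S ^+ 3 <=
  3 * \sum_(S : {set 'I_k} | #|S| == m) (m%:R * \sum_i x i ^+ 2 + 2 * Ys x S ^+ 2) * Ys x S ^+ 2.
Proof.
move=> hk hx; rewrite -(key_id (fun y => y ^+ 3) hk hx).
rewrite -(sum_P_D2 (fun y => y ^+ 2) hk hx) /=.
have e : \sum_(u | Pt m u) (x u.2 - x u.1.2) ^+ 2 * Ys x u.1.1 ^+ 2 =
  \sum_(u | Pt m u) (x u.2 - x u.1.2) ^+ 2 * Ys x (u.2 |: (u.1.1 :\ u.1.2)) ^+ 2.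
  transitivity (\sum_(u | Pt m u) (x u.1.2 - x u.2) ^+ 2 * Ys x u.1.1 ^+ 2).
    by apply: eq_bigr => u _; rewrite -sqrrN opprB.
  exact: (@reindex_swp _ _ m (fun S i j => (x i - x j) ^+ 2 * Ys x S ^+ 2)).
apply: (@le_trans _ _ (\sum_(u | Pt m u) (3 / 2) * ((x u.2 - x u.1.2) ^+ 2 *
    (Ys x (u.2 |: (u.1.1 :\ u.1.2)) ^+ 2 + Ys x u.1.1 ^+ 2)))).
  apply: ler_sum => u /and3P [_ hi hj].
  rewrite Ys_swp //; move: (x u.2) (x u.1.2) (Ys x u.1.1) => a b y.
  rewrite -subr_ge0.
  have -> : 3 / 2 * ((a - b) ^+ 2 * ((y - b + a) ^+ 2 + y ^+ 2)) -
     (a - b) * ((y - b + a) ^+ 3 - y ^+ 3) = (a - b) ^+ 4 / 2 by field.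
  have -> : (a - b) ^+ 4 = ((a - b) ^+ 2) ^+ 2 by rewrite -exprM.
  by rewrite divr_ge0 // sqr_ge0.
rewrite -mulr_sumr.
rewrite (eq_bigr _ (fun u _ => mulrDr _ _ _)).
rewrite big_split /= -e.
move: (\sum_(u | Pt m u) _) => s.
rewrite le_eqVlt; apply/orP; left; apply/eqP; lra.
Qed.

Lemma cs_sum (R : rcfType) k (y : 'I_k -> R) : (0 < k)%N ->
  (\sum_i y i) ^+ 2 <= k%:R * \sum_i y i ^+ 2.
Proof.
move=> hk.
have h0 : 0 <= \sum_i (k%:R * y i - \sum_j y j) ^+ 2 by apply: sumr_ge0 => i _; exact: sqr_ge0.
have e : \sum_i (k%:R * y i - \sum_j y j) ^+ 2 =
   k%:R * (k%:R * \sum_i y i ^+ 2 - (\sum_i y i) ^+ 2).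
  under eq_bigr do rewrite sqrrB.
  rewrite big_split sumrB /= sumr_const card_ord sumrMnl -mulr_suml -mulr_sumr.
  have -> : \sum_(i < k) (k%:R * y i) ^+ 2 = k%:R ^+ 2 * \sum_i y i ^+ 2.
    by rewrite mulr_sumr; apply: eq_bigr => i _; rewrite exprMn.
  ring.
rewrite e pmulr_rge0 ?ltr0n // subr_ge0 in h0; exact: h0.
Qed.

Unset Implicit Arguments.

Theorem corollary4p2 (R : rcfType) (k : nat) (gamma : R)
  (p : {ffun 'I_k -> R}) :
  (2 <= k)%N -> ~~ odd k -> 0 < gamma ->
  is_distr p -> dTV p (unif R k) > gamma ->
  prob_unif_subset R (k %/ 2)
    (fun S => `|massof p S - 2^-1| > gamma / Num.sqrt (5 * k)%:R) > 477%:R^-1.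
Proof.
move=> hk2 hodd hg [hp0 hp1] hd.
set m := (k %/ 2)%N.
have hk : k = (m + m)%N.
  by rewrite /m divn2 addnn -{1}(odd_double_half k) (negbTE hodd).
have hm1 : (1 <= m)%N by lia.
have hk0 : (k%:R : R) != 0 by rewrite pnatr_eq0; lia.
have hm0 : (m%:R : R) != 0 by rewrite pnatr_eq0; lia.
have hkr : (k%:R : R) = 2 * m%:R.
  have -> : k = (m + m)%N := hk. rewrite natrD; ring.
pose x := fun i => p i - (k%:R)^-1.
have hx : \sum_i x i = 0.
  by rewrite /x sumrB hp1 sumr_const card_ord -[k%:R^-1 *+ k]mulr_natr mulVf // subrr.
have hY : forall S : {set 'I_k}, #|S| = m -> massof p S - 2^-1 = Ys x S.
  move=> S hS; rewrite /massof /Ys /x sumrB sumr_const hS -mulr_natr hkr.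
  field; exact: hm0.
have hs : 2 * gamma < \sum_i `|x i|.
  move: hd; rewrite /dTV.
  have -> : \sum_i `|p i - unif R k i| = \sum_i `|x i|.
    by apply: eq_bigr => i _; rewrite /unif ffunE.
  move=> h; lra.
clearbody x.
pose A := \sum_i x i ^+ 2.
have hA : 4 * gamma ^+ 2 < k%:R * A.
  have cs := cs_sum (fun i => `|x i|) (ltnW hk2).
  have e : \sum_i `|x i| ^+ 2 = A by apply: eq_bigr => i _; rewrite real_normK // num_real.
  rewrite /= e in cs.
  have h2 : 0 <= 2 * gamma by lra.
  move: hs cs; move: (\sum_i `|x i|) => s hs cs; nra.
have hA' : 2 * gamma ^+ 2 < m%:R * A by move: hA; rewrite hkr; nra.
pose N := \sum_(S : {set 'I_k} | #|S| == m) (1 : R).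
have hN : #|[set S : {set 'I_k} | #|S| == m]|%:R = N by rewrite -sum1dep_card natr_sum.
have Npos : 0 < N by rewrite -hN card_draws card_ord ltr0n bin_gt0; lia.
pose Q2 := \sum_(S : {set 'I_k} | #|S| == m) Ys x S ^+ 2.
pose Q4 := \sum_(S : {set 'I_k} | #|S| == m) Ys x S ^+ 4.
have e2 : 4 * m%:R * Q2 = m%:R * A * N + 2 * Q2.
  have h := Q2_id hk hx.
  have l : \sum_(S : {set 'I_k} | #|S| == m) (4 * m%:R) * Ys x S * Ys x S = 4 * m%:R * Q2.
    by rewrite /Q2 (mulr_sumr _ _ _ (4 * m%:R)); apply: eq_bigr => S _; rewrite expr2 mulrA.
  have r : \sum_(S : {set 'I_k} | #|S| == m) (m%:R * \sum_i x i ^+ 2 + 2 * Ys x S ^+ 2) =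
      m%:R * A * N + 2 * Q2.
    rewrite big_split /= /N /Q2 (mulr_sumr _ _ _ (m%:R * A)) (mulr_sumr _ _ _ 2).
    by congr (_ + _); apply: eq_bigr => S _; rewrite mulr1.
  by rewrite -l h r.
have e4 : 4 * m%:R * Q4 <= 3 * (m%:R * A * Q2 + 2 * Q4).
  have h := Q4_ineq hk hx.
  have l : \sum_(S : {set 'I_k} | #|S| == m) (4 * m%:R) * Ys x S * Ys x S ^+ 3 = 4 * m%:R * Q4.
    by rewrite /Q4 (mulr_sumr _ _ _ (4 * m%:R)); apply: eq_bigr => S _; rewrite -mulrA -exprS.
  have r : \sum_(S : {set 'I_k} | #|S| == m) (m%:R * \sum_i x i ^+ 2 + 2 * Ys x S ^+ 2) * Ys x S ^+ 2
     = m%:R * A * Q2 + 2 * Q4.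
    rewrite /Q2 /Q4 (mulr_sumr _ _ _ (m%:R * A)) (mulr_sumr _ _ _ 2) -big_split /=.
    by apply: eq_bigr => S _; rewrite mulrDl -[2 * _ * _]mulrA -exprD.
  by rewrite -l -r.
have hm1case : m = 1%N -> Q4 <= A * Q2.
  move=> m1; rewrite /Q4 /Q2 mulr_sumr; apply: ler_sum => S /eqP hS.
  have : #|S| == 1%N by rewrite hS m1.
  move/cards1P => [i ->]; rewrite /Ys big_set1.
  have hi : x i ^+ 2 <= A.
    rewrite /A (bigD1 i) //= lerDl; apply: sumr_ge0 => j _; exact: sqr_ge0.
  have := sqr_ge0 (x i); move: hi; move: (x i) => y; nra.
have hmr : 1 <= (m%:R : R) by rewrite ler1n.
have hg2 : 0 < gamma ^+ 2 by rewrite exprn_gt0.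
have hmA : 0 < m%:R * A by lra.
have hmAN : 0 < m%:R * A * N by rewrite mulr_gt0.
have Q2pos : 0 < Q2.
  have h2 : 0 < (4 * m%:R - 2) * Q2 by lra.
  by move: h2; rewrite pmulr_rgt0 //; lra.
have hQ4 : N * Q4 <= 9 * Q2 ^+ 2.
  case: (m =P 1%N) => [m1 | mn1].
  - have h := hm1case m1.
    have hm : (m%:R : R) = 1 by rewrite m1.
    rewrite hm in e2.
    have h' := ler_wpM2l (ltW Npos) h.
    have e2Q := congr1 (fun z => z * Q2) e2; simpl in e2Q.
    have := sqr_ge0 Q2.
    lra.
  - have h2m : (1 < m)%N.
      by rewrite ltn_neqAle hm1 andbT; apply/eqP => h1; apply: mn1.
    have hmr2 : 2 <= (m%:R : R) by rewrite ler_nat.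
    have a2 := ler_wpM2l (ltW Npos) e4.
    have e2Q := congr1 (fun z => z * Q2) e2; simpl in e2Q.
    have b1 : 0 <= (m%:R : R) - 2 by rewrite subr_ge0.
    have b2 := mulr_ge0 b1 (sqr_ge0 Q2).
    have b3 : (4 * m%:R - 6) * (N * Q4 - 9 * Q2 ^+ 2) <= 0 by lra.
    by move: b3; rewrite pmulr_rle0; lra.
set t := gamma / Num.sqrt (5 * k)%:R.
have ht0 : 0 <= t by rewrite /t divr_ge0 ?sqrtr_ge0 // ltW.
have ht2 : t ^+ 2 * (10 * m%:R) = gamma ^+ 2.
  rewrite /t expr_div_n sqr_sqrtr ?ler0n // natrM hkr.
  by field; exact: hm0.
have hNt : 5 * (N * t ^+ 2) < Q2.
  have c1 : 2 * gamma ^+ 2 * N < m%:R * A * N by rewrite ltr_pM2r.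
  have c2 : (10 * m%:R) * (5 * (N * t ^+ 2)) = 5 * N * gamma ^+ 2.
    by rewrite -ht2; ring.
  have c3 : (10 * m%:R) * (5 * (N * t ^+ 2)) < (10 * m%:R) * Q2 by lra.
  by move: c3; rewrite ltr_pM2l //; lra.
rewrite /prob_unif_subset hN.
have hG : #|[set S : {set 'I_k} | (#|S| == m) && (t < `|massof p S - 2^-1|)]|%:R =
   \sum_(S : {set 'I_k} | #|S| == m) (if t < `|massof p S - 2^-1| then 1 else 0 : R).
  by rewrite -sum1dep_card natr_sum big_mkcondr.
rewrite hG.
set G := \sum_(S : {set 'I_k} | #|S| == m) _.
have hQN : 0 < 18 * Q2 * N by rewrite !mulr_gt0.
have pw : forall S : {set 'I_k}, #|S| == m ->
   18 * Q2 * N * Ys x S ^+ 2 <=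
   18 * Q2 * N * t ^+ 2 + N ^+ 2 * Ys x S ^+ 4 +
   81 * Q2 ^+ 2 * (if t < `|massof p S - 2^-1| then 1 else 0).
  move=> S /eqP hS; rewrite -(hY S hS); move: (massof p S - 2^-1) => v.
  have q1 : 0 <= 18 * Q2 * N * t ^+ 2 by apply: mulr_ge0; [exact: ltW hQN | exact: sqr_ge0].
  have q2 : 0 <= N ^+ 2 * v ^+ 4.
    have -> : v ^+ 4 = (v ^+ 2) ^+ 2 by rewrite -exprM.
    by rewrite mulr_ge0 ?sqr_ge0.
  case: ifP => hv.
  - have := sqr_ge0 (N * v ^+ 2 - 9 * Q2).
    have e : (N * v ^+ 2 - 9 * Q2) ^+ 2 = N ^+ 2 * v ^+ 4 - 18 * Q2 * N * v ^+ 2 + 81 * Q2 ^+ 2.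
      by rewrite sqrrB exprMn -exprM; lra.
    rewrite e; lra.
  - have h1 : `|v| <= t by rewrite leNgt hv.
    have h2 : `|v| ^+ 2 <= t ^+ 2.
      by rewrite !expr2 ler_pM // normr_ge0.
    rewrite real_normK ?num_real // in h2.
    have h3 := ler_wpM2l (ltW hQN) h2.
    lra.
have hsum : \sum_(S : {set 'I_k} | #|S| == m) 18 * Q2 * N * Ys x S ^+ 2 <=
   \sum_(S : {set 'I_k} | #|S| == m) (18 * Q2 * N * t ^+ 2 + N ^+ 2 * Ys x S ^+ 4 +
   81 * Q2 ^+ 2 * (if t < `|massof p S - 2^-1| then 1 else 0)) by apply: ler_sum.
have s1 : \sum_(S : {set 'I_k} | #|S| == m) 18 * Q2 * N * Ys x S ^+ 2 = 18 * Q2 * N * Q2.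
  by rewrite -(mulr_sumr _ _ _ (18 * Q2 * N)).
rewrite s1 !big_split /= -(mulr_sumr _ _ _ (N ^+ 2)) -(mulr_sumr _ _ _ (81 * Q2 ^+ 2)) -/G in hsum.
have s2 : \sum_(S : {set 'I_k} | #|S| == m) 18 * Q2 * N * t ^+ 2 = 18 * Q2 * N * t ^+ 2 * N.
  move: (18 * Q2 * N * t ^+ 2) => c.
  by rewrite /N mulr_sumr; apply: eq_bigr => S _; rewrite mulr1.
rewrite s2 in hsum.
have dQ4 : \sum_(S : {set 'I_k} | #|S| == m) Ys x S ^+ 4 = Q4 by [].
rewrite dQ4 in hsum.
have f1 := ler_wpM2l (ltW Npos) hQ4.
have f2 : (18 * Q2 * N) * (5 * (N * t ^+ 2)) < (18 * Q2 * N) * Q2 by rewrite ltr_pM2l.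
have f3 : Q2 ^+ 2 * (N - 15 * G) < 0 by lra.
rewrite pmulr_rlt0 ?exprn_gt0 // in f3.
rewrite ltr_pdivlMr //; lra.
Qed.
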